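(* Let $X$ be an infinite set with a metric $d$ inducing the discrete topology and having bounded geometry, equipped with the counting measure. Let $\xi$ be a filter on $X$ and $T\in\mathscr{E}(X)$. Then $$T\in\mathscr{G}_\xi(X)\iff\lim_{x\to\xi}\ \sup_{y,z\in B_x(r)}|\langle y,Tz\rangle|=0\ \text{for all } r>0.$$ Moreover, if $\xi$ is coarse, then $\mathscr{G}_\xi(X)=\{T\in\mathscr{E}(X):\lim_{x,y\to\xi}\langle x,Ty\rangle=0\}$.
   Context: Bounded geometry: for every $r>0$ the number of points of $B_x(r)=\{y:d(x,y)\le r\}$ is bounded by a constant independent of $x$. $L^2(X)=\ell^2(X)$ and each $x\in X$ is identified with the basis vector $\mathbf{1}_{\{x\}}$, so $\langle x,Ty\rangle$ is the matrix coefficient of $T$. $\mathbf{1}_A$ is multiplication by the characteristic function of $A$. A kernel $k$ on $X\times X$ is controlled if $k(x,y)=0$ whenever $d(x,y)>r$ for some $r$; $\mathscr{E}(X)$ is the norm closure of the operators $(Op(k)f)(x)=\sum_y k(x,y)f(y)$ with $k$ bounded, uniformly continuous and controlled. For a filter $\xi$, $\lim_{x\to\xi}f(x)=0$ means $\{x:|f(x)|<\varepsilon\}\in\xi$ for each $\varepsilon>0$, and $\lim_{x,y\to\xi}g(x,y)=0$ means that for each $\varepsilon>0$ there is $F\in\xi$ with $|g(x,y)|<\varepsilon$ for all $x,y\in F$. $\mathscr{G}_\xi(X)=\{T\in\mathscr{E}(X):\lim_{x\to\xi}\|\mathbf{1}_{B_x(r)}T\|=0\ \forall r>0\}$. With $F^{(r)}=\{x:\inf_{y\notin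 F}d(x,y)>r\}$, $\xi$ is coarse if $F\in\xi\Rightarrow F^{(r)}\in\xi$ for all $r>0$. *)

(* Defs.v *)
From HB Require Import structures.
From mathcomp Require Import all_boot all_order all_algebra.
From mathcomp Require Import all_classical all_reals all_analysis.
From mathcomp Require Import complex.

Set Implicit Arguments.
Unset Strict Implicit.
Unset Printing Implicit Defensive.

Import Order.TTheory GRing.Theory Num.Theory.
Local Open Scope classical_set_scope.
Local Open Scope ring_scope.

Section Defs.
Context {R : realType} {X : choiceType}.
Local Notation C := (R[i]).

Definition cabs (z : C) : R := ComplexField.Normc.normc z.

Definition is_metric (d : X -> X -> R) : Prop :=
  [/\ (forall x y, 0 <= d x y),
      (forall x y, d x y = 0 <-> x = y),
      (forall x y, d x y = d y x) &
      (forall x y z, d x z <= d x y + d y z)].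

Definition ball_ (d : X -> X -> R) (x : X) (r : R) : set X :=
  [set y | d x y <= r].

Definition discrete_metric (d : X -> X -> R) : Prop :=
  forall x, exists2 e : R, 0 < e & forall y, d x y < e -> y = x.

(** bounded geometry: for every r > 0 the number of points of B_x(r)
    is bounded by a constant independent of x *)
Definition bounded_geometry (d : X -> X -> R) : Prop :=
  forall r : R, 0 < r -> exists N : nat, forall (x : X) (s : seq X),
    uniq s -> (forall y, y \in s -> ball_ d x r y) -> (size s <= N)%N.

(** l^2(X) with the counting measure *)
Definition l2 (f : X -> C) : Prop :=
  (\esum_(x in [set: X]) ((cabs (f x)) ^+ 2)%:E < +oo)%E.

(** the l^2 norm (+oo outside l^2) *)
Definition l2norm (f : X -> C) : \bar R :=
  if `[< l2 f >] then
    (Num.sqrt (fine (\esum_(x in [set: X]) ((cabs (f x)) ^+ 2)%:E)))%:E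
  else +oo%E.

(** operators are maps (X -> C) -> (X -> C), considered on l^2 *)
Definition opnorm (A : (X -> C) -> (X -> C)) : \bar R :=
  ereal_sup [set l2norm (A f) | f in [set f | l2 f /\ (l2norm f <= 1)%E]].

Definition bounded_op (T : (X -> C) -> (X -> C)) : Prop :=
  [/\ (forall (a : C) f g, l2 f -> l2 g ->
         T (fun x => a * f x + g x) = (fun x => a * T f x + T g x)),
      (forall f, l2 f -> l2 (T f)) &
      (exists M : R, (opnorm T <= M%:E)%E)].

Definition kernel_bounded (k : X -> X -> C) : Prop :=
  exists M : R, forall x y, cabs (k x y) <= M.

Definition kernel_unif_cont (d : X -> X -> R) (k : X -> X -> C) : Prop :=
  forall e : R, 0 < e -> exists2 delta : R, 0 < delta &
    forall x y x' y', d x x' < delta -> d y y' < delta ->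
      cabs (k x y - k x' y') < e.

Definition kernel_controlled (d : X -> X -> R) (k : X -> X -> C) : Prop :=
  exists r : R, forall x y, r < d x y -> k x y = 0.

Definition admissible_kernel (d : X -> X -> R) (k : X -> X -> C) : Prop :=
  [/\ kernel_bounded k, kernel_unif_cont d k & kernel_controlled d k].

(** (Op(k) f)(x) = sum_y k(x,y) f(y)  (a finite sum for controlled k under
    bounded geometry; written as a finitely supported sum) *)
Definition Op (k : X -> X -> C) (f : X -> C) : X -> C :=
  fun x => \sum_(y \in [set y | k x y != 0]) (k x y * f y).

Definition opsub (A B : (X -> C) -> (X -> C)) : (X -> C) -> (X -> C) :=
  fun f x => A f x - B f x.

Definition in_E (d : X -> X -> R) (T : (X -> C) -> (X -> C)) : Prop :=
  bounded_op T /\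
  forall e : R, 0 < e -> exists k, admissible_kernel d k /\
    (opnorm (opsub T (Op k)) < e%:E)%E.

Definition restr (A : set X) (T : (X -> C) -> (X -> C)) : (X -> C) -> (X -> C) :=
  fun f x => \1_A x * T f x.

Definition flim0 (xi : set_system X) (g : X -> \bar R) : Prop :=
  forall e : R, 0 < e -> xi [set x | (g x < e%:E)%E].

Definition in_G (d : X -> X -> R) (xi : set_system X)
    (T : (X -> C) -> (X -> C)) : Prop :=
  in_E d T /\
  forall r : R, 0 < r -> flim0 xi (fun x => opnorm (restr (ball_ d x r) T)).

(** matrix coefficient <y, T z> *)
Definition coef (T : (X -> C) -> (X -> C)) (y z : X) : C :=
  T (\1_[set z]) y.

Definition ball_coef_sup (d : X -> X -> R) (T : (X -> C) -> (X -> C))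
    (x : X) (r : R) : \bar R :=
  ereal_sup [set (cabs (coef T p.1 p.2))%:E |
               p in [set p : X * X | ball_ d x r p.1 /\ ball_ d x r p.2]].

(** F^(r) = { x : inf_{y notin F} d(x,y) > r }  (inf of the empty set = +oo) *)
Definition rinterior (d : X -> X -> R) (F : set X) (r : R) : set X :=
  [set x | (r%:E < ereal_inf [set (d x y)%:E | y in ~` F])%E].

Definition coarse_filter (d : X -> X -> R) (xi : set_system X) : Prop :=
  forall (F : set X) (r : R), 0 < r -> xi F -> xi (rinterior d F r).

Definition flim0_2 (xi : set_system X) (g : X -> X -> C) : Prop :=
  forall e : R, 0 < e -> exists2 F, xi F &
    forall x y, F x -> F y -> cabs (g x y) < e.

End Defs.

(* Main.v *)
Require Import Defs.
From HB Require Import structures.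
From mathcomp Require Import all_boot all_order all_algebra.
From mathcomp Require Import all_classical all_reals all_analysis.
From mathcomp Require Import complex.
From mathcomp Require Import ring lra.
Import Order.TTheory GRing.Theory Num.Theory.
Local Open Scope classical_set_scope.
Local Open Scope ring_scope.

Section Cabs.
Context {R : realType}.
Implicit Types z w : R[i].

Lemma cabs_ge0 z : 0 <= cabs z.
Proof. by case: z => a b; rewrite /cabs /=; exact: sqrtr_ge0. Qed.

Lemma cabsD z w : cabs (z + w) <= cabs z + cabs w.
Proof. exact: (@le_normcD R z w). Qed.

Lemma cabsM z w : cabs (z * w) = cabs z * cabs w.
Proof. exact: ComplexField.Normc.normcM. Qed.

Lemma cabs0 : cabs (0 : R[i]) = 0.
Proof. exact: ComplexField.Normc.normc0. Qed.

Lemma cabs1 : cabs (1 : R[i]) = 1.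
Proof. exact: ComplexField.Normc.normc1. Qed.

Lemma cabsN z : cabs (- z) = cabs z.
Proof. exact: (@normcN R z). Qed.

Lemma cabsB z w : cabs (z - w) = cabs (w - z).
Proof. by rewrite -cabsN opprB. Qed.

Lemma cabs_sum (I : Type) (s : seq I) (F : I -> R[i]) :
  cabs (\sum_(i <- s) F i) <= \sum_(i <- s) cabs (F i).
Proof.
elim: s => [|a s IH]; first by rewrite !big_nil cabs0.
rewrite !big_cons; apply: (le_trans (cabsD _ _)); exact: lerD.
Qed.

Lemma cabs_indic (T : Type) (A : set T) (x : T) : cabs (\1_A x : R[i]) <= 1.
Proof. by rewrite indicE; case: (x \in A); rewrite ?cabs1 ?cabs0. Qed.

End Cabs.
Section L2.
Context {R : realType} {X : choiceType}.
Local Notation C := (R[i]).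
Implicit Types (f g : X -> C).

Lemma esum_sq_ge0 g : (0 <= \esum_(x in [set: X]) ((cabs (g x)) ^+ 2)%:E)%E.
Proof. by apply: esum_ge0 => x _; rewrite lee_fin sqr_ge0. Qed.

Lemma cabs_le_l2norm g y : ((cabs (g y))%:E <= l2norm g)%E.
Proof.
rewrite /l2norm; case: asboolP => [hl2|_]; last by rewrite leey.
set S := esum _ _.
have Sge : (((cabs (g y)) ^+ 2)%:E <= S)%E.
  apply: esum_ge; exists [set y]; first by split => //; exact: finite_set1.
  by rewrite fsbig_set1.
have Sfin : S \is a fin_num by rewrite ge0_fin_numE //; exact: esum_sq_ge0.
rewrite -(fineK Sfin) lee_fin in Sge.
rewrite lee_fin -(ger0_norm (cabs_ge0 (g y))) -sqrtr_sqr.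
exact: ler_wsqrtr.
Qed.

Lemma sum_le_const (I : eqType) (s : seq I) (F : I -> R) (c : R) :
  (forall i, i \in s -> F i <= c) -> \sum_(i <- s) F i <= (size s)%:R * c.
Proof.
rewrite mulr_natl; elim: s => [|a s IH] Fc; first by rewrite big_nil.
rewrite big_cons /= mulrS; apply: lerD; first by apply: Fc; rewrite mem_head.
by apply: IH => i iS; apply: Fc; rewrite in_cons iS orbT.
Qed.

Lemma l2_fin g (s : seq X) (M : R) : uniq s -> 0 <= M ->
  (forall x, x \notin s -> g x = 0) -> (forall x, cabs (g x) <= M) ->
  l2 g /\ (l2norm g <= ((size s)%:R * M)%:E)%E.
Proof.
move=> us M0 g0 gM.
have E : \esum_(x in [set: X]) ((cabs (g x)) ^+ 2)%:E =
         (\sum_(x <- s) (cabs (g x)) ^+ 2)%:E.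
  rewrite (eq_esum (b := fun x => if x \in [set` s] then
                       ((cabs (g x)) ^+ 2)%:E else 0%E)); last first.
    move=> x _; case: ifPn => // /negP xs.
    by rewrite g0 ?cabs0 ?expr0n //; apply/negP => xs'; apply: xs; rewrite inE.
  rewrite -esum_mkcond esum_fset; last 2 first.
  - exact: finite_seq.
  - by move=> i _; rewrite lee_fin sqr_ge0.
  by rewrite -fsbig_seq // sumEFin.
have Sle : \sum_(x <- s) (cabs (g x)) ^+ 2 <= (size s)%:R * M ^+ 2.
  apply: sum_le_const => x _; rewrite !expr2.
  by apply: ler_pM; rewrite ?cabs_ge0.
have hl2 : l2 g by rewrite /l2 E ltry.
split => //; rewrite /l2norm asboolT // E /= lee_fin.
have n0 : 0 <= (size s)%:R * M :> R by rewrite mulr_ge0.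
rewrite -(ger0_norm n0) -sqrtr_sqr; apply: ler_wsqrtr.
apply: (le_trans Sle); rewrite exprMn ler_wpM2r ?sqr_ge0 //.
rewrite expr2 -natrM ler_nat; case: (size s) => // n.
by rewrite leq_pmulr.
Qed.

Lemma l2_le f g : l2 f -> (forall x, cabs (g x) <= cabs (f x)) ->
  l2 g /\ (l2norm g <= l2norm f)%E.
Proof.
move=> hf gf.
have le : (\esum_(x in [set: X]) ((cabs (g x)) ^+ 2)%:E <=
           \esum_(x in [set: X]) ((cabs (f x)) ^+ 2)%:E)%E.
  apply: le_esum => x _; rewrite lee_fin !expr2.
  by apply: ler_pM; rewrite ?cabs_ge0.
have hg : l2 g by rewrite /l2 (le_lt_trans le).
split => //; rewrite /l2norm !asboolT // lee_fin; apply: ler_wsqrtr.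
by apply: fine_le; rewrite // ge0_fin_numE ?esum_sq_ge0.
Qed.

Lemma indic1_l2 (z : X) : l2 (\1_[set z] : X -> C) /\
  (l2norm (\1_[set z] : X -> C) <= 1%:E)%E.
Proof.
have := @l2_fin (\1_[set z]) [:: z] 1 isT ler01.
rewrite /= mul1r; apply.
  by move=> x; rewrite inE indicE => /negPf xz; rewrite memNset //= => exz; rewrite exz eqxx in xz.
by move=> x; exact: cabs_indic.
Qed.

Lemma cabs_le_opnorm (A : (X -> C) -> (X -> C)) f y :
  l2 f -> (l2norm f <= 1%:E)%E -> ((cabs (A f y))%:E <= opnorm A)%E.
Proof.
move=> hf hf1; apply: (le_trans (cabs_le_l2norm _ y)).
by apply: ereal_sup_ubound; exists f.
Qed.

End L2.
Section Ops.
Context {R : realType} {X : choiceType}.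
Local Notation C := (R[i]).
Implicit Types (f g : X -> C).

Lemma l2_zero : l2 (fun _ : X => 0 : C).
Proof.
have [] := @l2_fin R X (fun _ => 0) [::] 0 isT (lexx _) => //.
by move=> x; rewrite cabs0.
Qed.

Lemma l2_sum (s : seq X) (c : X -> C) :
  l2 (fun x => \sum_(z <- s) c z * \1_[set z] x).
Proof.
have [] := @l2_fin R X (fun x => \sum_(z <- s) c z * \1_[set z] x) (undup s)
   (\sum_(z <- s) cabs (c z)) (undup_uniq s) _ _ _ => //.
- by apply: sumr_ge0 => z _; exact: cabs_ge0.
- move=> x; rewrite mem_undup => xs; rewrite big1_seq // => z /= zs.
  rewrite indicE memNset ?mulr0 //= => xz; rewrite xz zs in xs; done.
- move=> x /=; apply: le_trans; first exact: cabs_sum.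
  apply: ler_sum => z _.
  rewrite cabsM -[X in _ <= X]mulr1; apply: ler_wpM2l; first exact: cabs_ge0.
  exact: cabs_indic.
Qed.

Lemma T_zero (T : (X -> C) -> (X -> C)) :
  (forall (a : C) f g, l2 f -> l2 g ->
    T (fun x => a * f x + g x) = (fun x => a * T f x + T g x)) ->
  T (fun _ => 0) = (fun _ => 0).
Proof.
move=> Tlin; have h := Tlin (-1) _ _ l2_zero l2_zero.
rewrite (_ : (fun x : X => -1 * 0 + 0) = fun _ => 0 : C) in h; last first.
  by apply: boolp.funext => x; rewrite mulr0 addr0.
by rewrite h; apply: boolp.funext => x; rewrite mulN1r addNr.
Qed.

Lemma T_sum (T : (X -> C) -> (X -> C)) :
  (forall (a : C) f g, l2 f -> l2 g ->
    T (fun x => a * f x + g x) = (fun x => a * T f x + T g x)) ->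
  forall (s : seq X) (c : X -> C),
  T (fun x => \sum_(z <- s) c z * \1_[set z] x) =
  fun x => \sum_(z <- s) c z * T \1_[set z] x.
Proof.
move=> Tlin; elim => [|a s IH] c.
  rewrite (_ : (fun x : X => \sum_(z <- [::]) c z * \1_[set z] x) = fun _ => 0).
    by rewrite T_zero //; apply: boolp.funext => x; rewrite big_nil.
  by apply: boolp.funext => x; rewrite big_nil.
rewrite (_ : (fun x : X => \sum_(z <- a :: s) c z * \1_[set z] x) =
   fun x => c a * \1_[set a] x + \sum_(z <- s) c z * \1_[set z] x); last first.
  by apply: boolp.funext => x; rewrite big_cons.
rewrite Tlin ?IH; first by apply: boolp.funext => x; rewrite big_cons.
  exact: (proj1 (indic1_l2 a)).
exact: l2_sum.
Qed.

Lemma Op_indic0 (k : X -> X -> C) x y : k x y = 0 -> Op k (\1_[set y]) x = 0.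
Proof.
move=> kxy; rewrite /Op; apply: fsbig1 => w /= kw.
case: (eqVneq w y) => [wy|wy]; first by rewrite wy kxy eqxx in kw.
by rewrite indicE memNset ?mulr0 //= => yw; rewrite yw eqxx in wy.
Qed.

Lemma Op_eq (k : X -> X -> C) f g x :
  (forall w, k x w != 0 -> f w = g w) -> Op k f x = Op k g x.
Proof.
move=> fg; rewrite /Op; apply: eq_fsbigr => w; rewrite inE /= => kw.
by rewrite fg.
Qed.

End Ops.

Section Balls.
Context {R : realType} {X : choiceType}.

Lemma ball_fin (d : X -> X -> R) : bounded_geometry d ->
  forall r : R, 0 < r -> exists N : nat, forall x : X,
    finite_set (Defs.ball_ d x r) /\ (size (finmap.enum_fset (fset_set (Defs.ball_ d x r))) <= N)%N.
Proof.
move=> dbg r r0; have [N HN] := dbg r r0; exists N => x.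
have fin : finite_set (Defs.ball_ d x r).
  apply: contrapT => inf.
  have [B BA szB] := infinite_set_fset N.+1 inf.
  have := HN x (finmap.enum_fset B) (finmap.fset_uniq B) (fun y yB => BA y yB).
  by rewrite leqNgt szB.
split => //.
apply: (HN x). exact: finmap.fset_uniq.
by move=> y; rewrite in_fset_set // inE.
Qed.

End Balls.
Section Main.
Context {R : realType} {X : choiceType}.
Local Notation C := (R[i]).

Lemma easy_part (d : X -> X -> R) (T : (X -> C) -> (X -> C)) x r :
  (ball_coef_sup d T x r <= opnorm (restr (Defs.ball_ d x r) T))%E.
Proof.
apply: ge_ereal_sup => _ [[y z] /= [hy hz] <-].
have [h1 h2] := indic1_l2 (R := R) z.
have := cabs_le_opnorm (restr (Defs.ball_ d x r) T) \1_[set z] y h1 h2.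
by rewrite {1}/restr indicE mem_set // mul1r.
Qed.

Lemma approx_pt (T A : (X -> C) -> (X -> C)) (del : R) :
  (opnorm (opsub T A) < del%:E)%E ->
  forall f y, l2 f -> (l2norm f <= 1%:E)%E -> cabs (T f y - A f y) < del.
Proof.
move=> hA f y hf hf1; rewrite -lte_fin; apply: le_lt_trans hA.
exact: (cabs_le_opnorm (opsub T A) f y hf hf1).
Qed.

Lemma key_part (d : X -> X -> R) (xi : set_system X) (xiF : Filter xi)
  (dmet : is_metric d) (dbg : bounded_geometry d) (T : (X -> C) -> (X -> C)) :
  in_E d T ->
  (forall r : R, 0 < r -> flim0 xi (fun x => ball_coef_sup d T x r)) ->
  forall r : R, 0 < r -> flim0 xi (fun x => opnorm (restr (Defs.ball_ d x r) T)).
Proof.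
move=> [[Tlin _ _] Eapprox] H r r0 e e0.
have [_ _ dsym dtri] := dmet.
have [N1 HN1] := @ball_fin R X d dbg r r0.
pose K1 : R := N1%:R + 1.
have K10 : 0 < K1 by rewrite /K1 ltr_wpDl.
pose del := e / (4 * K1).
have del0 : 0 < del by rewrite /del divr_gt0 // mulr_gt0.
have [k [[_ _ [rk Hrk]] Hk]] := Eapprox del del0.
pose rho := r + `|rk|.
have rho0 : 0 < rho by rewrite /rho ltr_wpDr.
have [N3 HN3] := @ball_fin R X d dbg rho rho0.
pose K3 : R := N3%:R + 1.
have K30 : 0 < K3 by rewrite /K3 ltr_wpDl.
pose eta := e / (4 * K1 * K3).
have eta0 : 0 < eta by rewrite /eta divr_gt0 // !mulr_gt0.
apply: filterS (H rho rho0 eta eta0) => x /= hx.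
have hcoef : forall y z, Defs.ball_ d x rho y -> Defs.ball_ d x rho z ->
    cabs (coef T y z) < eta.
  move=> y z hy hz; rewrite -lte_fin; apply: le_lt_trans hx.
  by apply: ereal_sup_ubound; exists (y, z).
have happ := @approx_pt T (Op k) del Hk.
have [finrho szrho] := HN3 x.
have [finr szr] := HN1 x.
pose L := finmap.enum_fset (fset_set (Defs.ball_ d x rho)).
have uL : uniq L by exact: finmap.fset_uniq.
have inL : forall w, (w \in L) = (w \in Defs.ball_ d x rho).
  by move=> w; rewrite /L in_fset_set.
pose M := 2 * del + N3%:R * eta.
have M0 : 0 <= M by apply: addr_ge0; apply: mulr_ge0; rewrite // ltW.
have hpt : forall f y, l2 f -> (l2norm f <= 1%:E)%E -> Defs.ball_ d x r y ->
    cabs (T f y) <= M.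
  move=> f y hf hf1 hy.
  pose g := fun w => \sum_(z <- L) f z * \1_[set z] w.
  have gE : forall w, g w = if w \in L then f w else 0.
    move=> w; rewrite /g; case: ifPn => wL.
      rewrite (bigD1_seq w) //= indicE mem_set // mulr1 big1 ?addr0 // => z zw.
      by rewrite indicE memNset ?mulr0 //= => wz; rewrite wz eqxx in zw.
    rewrite big1_seq // => z /= zL.
    by rewrite indicE memNset ?mulr0 //= => wz; rewrite wz zL in wL.
  have [hg hg1] : l2 g /\ (l2norm g <= 1%:E)%E.
    have [hg hgf] := @l2_le R X f g hf (fun w => ltac:(rewrite gE; case: ifP => _;
       [exact: lexx | rewrite cabs0; exact: cabs_ge0])).
    by split => //; apply: le_trans hf1.
  have OpE : Op k f y = Op k g y.
    apply: Op_eq => w kw; rewrite gE inL mem_set //.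
    have dyw : d y w <= rk.
      rewrite leNgt; apply/negP => /Hrk kyw; by rewrite kyw eqxx in kw.
    rewrite /Defs.ball_ /=; apply: (le_trans (dtri x y w)); rewrite /rho.
    by apply: lerD => //; apply: (le_trans dyw); exact: ler_norm.
  have TgE : T g y = \sum_(z <- L) f z * coef T y z.
    by rewrite /g (@T_sum R X T Tlin).
  have Tg_le : cabs (T g y) <= N3%:R * eta.
    rewrite TgE; apply: le_trans; first exact: cabs_sum.
    apply: le_trans; first apply: (@sum_le_const R _ L _ eta).
      move=> z zL; rewrite cabsM.
        rewrite -[eta]mul1r; apply: ler_pM; rewrite ?cabs_ge0 //.
          by rewrite -lee_fin; apply: le_trans hf1; exact: cabs_le_l2norm.
        apply: ltW; apply: hcoef; last by rewrite -inE -inL.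
        rewrite /Defs.ball_ /=; apply: (le_trans hy); rewrite /rho lerDl //.
    by apply: ler_wpM2r; [exact: ltW | rewrite ler_nat].
  have ha := happ f y hf hf1.
  have hb := happ g y hg hg1.
  have -> : T f y = (T f y - Op k f y) + (Op k g y - T g y) + T g y.
    by rewrite OpE; ring.
  apply: le_trans; first exact: cabsD.
  have := cabsD (T f y - Op k f y) (Op k g y - T g y).
  rewrite (cabsB (Op k g y)) /M => hab; lra.
apply: (@le_lt_trans _ _ ((N1%:R * M)%:E))%E.
  apply: ge_ereal_sup => _ [f [hf hf1] <-].
  pose Lr := finmap.enum_fset (fset_set (Defs.ball_ d x r)).
  have hz : forall w, w \notin Lr -> restr (Defs.ball_ d x r) T f w = 0.
    move=> w wL; rewrite /restr indicE memNset ?mul0r // => bw; apply/negP: wL.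
    by rewrite negbK /Lr in_fset_set // mem_set.
  have hb : forall w, cabs (restr (Defs.ball_ d x r) T f w) <= M.
    move=> w; rewrite /restr indicE; case: (boolP (w \in Defs.ball_ d x r)) => wb.
      by rewrite mul1r; apply: hpt => //; exact: set_mem.
    by rewrite mul0r cabs0.
  have [_ h] := @l2_fin R X (restr (Defs.ball_ d x r) T f) Lr M
    (finmap.fset_uniq _) M0 hz hb.
  apply: le_trans h _; rewrite lee_fin; apply: ler_wpM2r => //.
  by rewrite ler_nat.
rewrite lte_fin /M.
have n10 : 0 <= N1%:R :> R by [].
have n30 : 0 <= N3%:R :> R by [].
have h1 : K1 * del = e / 4 by rewrite /del; field; rewrite gt_eqF.
have h2 : K1 * K3 * eta = e / 4.
  by rewrite /eta; field; rewrite ?gt_eqF //= mulf_neq0 ?gt_eqF.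
have h3 : N1%:R * del <= K1 * del.
  by apply: ler_wpM2r; [exact: ltW | rewrite /K1 lerDl].
have h4 : N1%:R * N3%:R * eta <= K1 * K3 * eta.
  apply: ler_wpM2r; first exact: ltW.
  by apply: ler_pM => //; rewrite ?/K1 ?/K3 lerDl.
nra.
Qed.

End Main.

Lemma inside_ball {R : realType} {X : choiceType} (d : X -> X -> R) (F : set X) r x y :
  rinterior d F r x -> Defs.ball_ d x r y -> F y.
Proof.
move=> hx hy; apply: contrapT => nFy.
have : (ereal_inf [set (d x y0)%:E | y0 in ~` F] <= (d x y)%:E)%E.
  by apply: ereal_inf_lbound; exists y.
move=> /(lt_le_trans hx); rewrite lte_fin => hlt.
by move: hy; rewrite /Defs.ball_ /= leNgt hlt.
Qed.

Theorem proposition5p10 (R : realType) (X : choiceType) (d : X -> X -> R)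
  (Xinf : infinite_set [set: X])
  (dmet : is_metric d) (ddisc : discrete_metric d)
  (dbg : bounded_geometry d)
  (xi : set_system X) (xiF : ProperFilter xi) :
  (forall T : (X -> R[i]) -> (X -> R[i]), in_E d T ->
     (in_G d xi T <->
      forall r : R, 0 < r -> flim0 xi (fun x => ball_coef_sup d T x r))) /\
  (coarse_filter d xi ->
     forall T : (X -> R[i]) -> (X -> R[i]),
       in_G d xi T <-> in_E d T /\ flim0_2 xi (coef T)).
Proof.
have xiF' : Filter xi by exact: xiF.
have [_ d0 _ _] := dmet.
have dxx : forall x r, 0 < r -> Defs.ball_ d x r x.
  by move=> x r r0; rewrite /Defs.ball_ /= (proj2 (d0 x x) erefl) ltW.
split.
  move=> T hE; split.
    move=> [_ hG] r r0 e e0; apply: filterS (hG r r0 e e0) => x /=.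
    by apply: le_lt_trans; exact: easy_part.
  by move=> H; split => //; exact: (@key_part R X d xi xiF' dmet dbg T).
move=> coarse T; split.
  move=> [hE hG]; split => // e e0.
  exists [set x | (opnorm (restr (Defs.ball_ d x 1) T) < e%:E)%E].
    exact: (hG 1 ltr01 e e0).
  move=> x y /= hx _; rewrite -lte_fin; apply: le_lt_trans hx.
  have [h1 h2] := indic1_l2 (R := R) y.
  have := cabs_le_opnorm (restr (Defs.ball_ d x 1) T) \1_[set y] x h1 h2.
  by rewrite {1}/restr indicE mem_set ?mul1r //; exact: dxx.
move=> [hE hF2]; split => //.
apply: (@key_part R X d xi xiF' dmet dbg T) => // r r0 e e0.
have e20 : 0 < e / 2 by rewrite divr_gt0.
have [F hF Fb] := hF2 (e / 2) e20.
apply: filterS (coarse F r r0 hF) => x hx /=.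
apply: (@le_lt_trans _ _ ((e / 2)%:E))%E; last by rewrite lte_fin; lra.
apply: ge_ereal_sup => _ [[y z] /= [hy hz] <-]; rewrite lee_fin; apply: ltW.
apply: Fb; [exact: (@inside_ball R X d F r x y hx hy) | exact: (@inside_ball R X d F r x z hx hz)].
Qed.
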